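(* $\Theta_t \cong \Gamma_t$ (as graphs).
   Context: $\mathcal{M}_{2n}$ is the set of perfect matchings of $K_{2n}$ and $\mathcal{M}_{2n-1}$ the set of near-perfect matchings of $K_{2n-1}$ (matchings with $n-1$ edges). $\Gamma_t$ is the graph on $\mathcal{M}_{2n}$ in which $m,m'$ are adjacent iff $|m\cap m'|<t$. For $m,m'\in\mathcal{M}_{2n-1}$, the multigraph union $m\cup m'$ is a disjoint union of even cycles (a common edge counting as a cycle of length $2$) and exactly one path with an even number of edges (possibly a single vertex, when $m,m'$ leave the same vertex unmatched); $d'(m,m')\vdash 2n-1$ is the partition whose parts are the numbers of vertices of these components (so each cycle of length $2k$ gives a part $2k$ and the path with $\ell$ edges gives the unique odd part $\ell+1$). $\Theta_t$ is the graph on $\mathcal{M}_{2n-1}$ in which $m,m'$ are adjacent iff $d'(m,m')$ has fewer than $t$ parts of size at most $2$. *)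

(* Defs.v *)
From mathcomp Require Import all_boot.
Set Implicit Arguments. Unset Strict Implicit. Unset Printing Implicit Defensive.

Definition is_matching (k : nat) (m : {set {set 'I_k}}) : bool :=
  [forall e in m, #|e| == 2] &&
  [forall e in m, forall e' in m, (e != e') ==> [disjoint e & e']].

Definition PM (n : nat) : finType :=
  {m : {set {set 'I_(2 * n)}} | is_matching m && (#|m| == n)}.

Definition NPM (n : nat) : finType :=
  {m : {set {set 'I_(2 * n - 1)}} | is_matching m && (#|m| == n - 1)}.

Definition union_rel (k : nat) (m m' : {set {set 'I_k}}) : rel 'I_k :=
  fun x y => [set x; y] \in m :|: m'.

Definition components (k : nat) (r : rel 'I_k) : {set {set 'I_k}} :=
  [set [set y | connect r x y] | x : 'I_k].

Definition dprime (n : nat) (m m' : NPM n) : seq nat :=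
  sort geq [seq #|C : {set 'I_(2 * n - 1)}| | C <- enum (components (union_rel (val m) (val m')))].

Definition Gamma (n t : nat) : rel (PM n) :=
  fun m m' => #|val m :&: val m'| < t.

Definition Theta (n t : nat) : rel (NPM n) :=
  fun m m' => count (fun p => p <= 2) (dprime m m') < t.

Arguments Gamma n t : clear implicits.
Arguments Theta n t : clear implicits.

Definition graph_iso (V W : finType) (a : rel V) (b : rel W) : Prop :=
  exists f : V -> W, bijective f /\ forall x y, a x y = b (f x) (f y).

(* Main.v *)
Require Import Defs.
From mathcomp Require Import all_boot zify.
Set Implicit Arguments. Unset Strict Implicit. Unset Printing Implicit Defensive.

Lemma count_enum_set (T : finType) (A : {set T}) (p : pred T) :
  count p (enum A) = #|[set x in A | p x]|.
Proof.
have -> : [set x in A | p x] = A :&: [set x | p x].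
  by apply/setP => x; rewrite !inE.
rewrite cardE (perm_size (enum_setI _ _)) size_filter.
by apply: eq_count => x; rewrite inE.
Qed.

Lemma matching_size k (m : {set {set 'I_k}}) e :
  is_matching m -> e \in m -> #|e| = 2.
Proof. by case/andP => /forall_inP H _ /H /eqP. Qed.

Lemma matching_disj k (m : {set {set 'I_k}}) e e' :
  is_matching m -> e \in m -> e' \in m -> e != e' -> [disjoint e & e'].
Proof.
by case/andP => _ /forall_inP H /H /forall_inP H' /H' /implyP.
Qed.

Lemma matching_uniq k (m : {set {set 'I_k}}) e e' x :
  is_matching m -> e \in m -> e' \in m -> x \in e -> x \in e' -> e = e'.
Proof.
move=> hm he he' xe xe'; apply/eqP; apply/negPn/negP => ne.
by move: (matching_disj hm he he' ne) => /disjoint_setI0/setP/(_ x); rewrite !inE xe xe'.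
Qed.

Lemma cover_card k (m : {set {set 'I_k}}) :
  is_matching m -> #|cover m| = 2 * #|m|.
Proof.
move=> hm.
have tr : trivIset m.
  by apply/trivIsetP => A B hA hB hne; exact: (matching_disj hm hA hB hne).
rewrite -(eqP tr) (eq_bigr (fun _ => 2)); last by move=> e /(matching_size hm).
by rewrite sum_nat_const mulnC.
Qed.

Definition cc k (r : rel 'I_k) x := [set y | connect r x y].
Definition U k (m : {set {set 'I_k}}) := ~: cover m.
Definition D k (m : {set {set 'I_k}}) := m :|: [set [set x] | x in U m].

Lemma edge_other k (e : {set 'I_k}) v : #|e| = 2 -> v \in e ->
  exists2 z, z != v & e = [set v; z].
Proof.
move=> /eqP/cards2P [a [b [ab ->]]]; rewrite !inE => /orP [] /eqP ->.
  by exists b; rewrite // eq_sym.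
by exists a => //; apply/setP => z; rewrite !inE orbC.
Qed.

Lemma U_card k n (m : {set {set 'I_k}}) : k.+1 = 2 * n ->
  is_matching m -> #|m| = n - 1 -> #|U m| = 1.
Proof.
move=> hk hm hc; have := cardsC (cover m); rewrite card_ord cover_card // hc /U.
lia.
Qed.

Lemma pair_sym k (x y : 'I_k) : [set x; y] = [set y; x].
Proof. by apply/setP => z; rewrite !inE orbC. Qed.

Lemma ur_sym k (m m' : {set {set 'I_k}}) : symmetric (union_rel m m').
Proof. by move=> x y; rewrite /union_rel pair_sym. Qed.

Lemma ur_swap k (m m' : {set {set 'I_k}}) x y :
  union_rel m m' x y = union_rel m' m x y.
Proof. by rewrite /union_rel (setUC m). Qed.

Lemma cc_iso k (r : rel 'I_k) x : (forall b, ~~ r x b) -> cc r x = [set x].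
Proof.
move=> h; apply/setP => y; rewrite !inE; apply/idP/idP; last by move/eqP->; exact: connect0.
case/connectP => [[|z p]] /=; first by move=> _ ->.
by rewrite (negbTE (h z)).
Qed.

Lemma key k (m1 m2 : {set {set 'I_k}}) (r : rel 'I_k) e x :
  is_matching m1 -> is_matching m2 ->
  (forall a b, r a b = ([set a; b] \in m1 :|: m2)) -> #|U m2| <= 1 ->
  e \in m1 -> x \in e -> #|cc r x| <= 2 -> cc r x = e /\ e \in m2.
Proof.
move=> hm1 hm2 hr hU he xe hcc.
have e2 := matching_size hm1 he.
have [y yx ee] := edge_other e2 xe.
have rxy : r x y by rewrite hr inE -ee he.
have sub : e \subset cc r x.
  apply/subsetP => z; rewrite ee !inE => /orP [] /eqP ->; [exact: connect0 | exact: connect1].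
have cce : cc r x = e.
  by apply/esym/eqP; rewrite eqEcard sub e2.
split => //; apply/negPn/negP => ne2.
have hv : forall v, v \in e -> v \in U m2.
  move=> v ve; rewrite inE; apply/bigcupP => [[e' he' ve']].
  have e'2 := matching_size hm2 he'.
  have [z zv e'e] := edge_other e'2 ve'.
  have rvz : r v z by rewrite hr inE -e'e he' orbT.
  have zcc : z \in cc r x.
    rewrite inE; apply: connect_trans (connect1 rvz).
    by move: ve; rewrite -cce inE.
  rewrite cce in zcc.
  have ee' : e' = e.
    apply/eqP; rewrite eqEcard e2 e'2 leqnn andbT e'e.
    by apply/subsetP => w; rewrite !inE => /orP [] /eqP ->.
  by move: he'; rewrite ee' (negbTE ne2).
have : [set x; y] \subset U m2.
  by apply/subsetP => w /set2P [] ->; apply: hv; rewrite ee !inE eqxx ?orbT.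
move/subset_leq_card; rewrite cards2 eq_sym yx /=.
by move=> h; move: (leq_trans h hU).
Qed.

Lemma not_cover_rel k (m m' : {set {set 'I_k}}) x :
  x \notin cover m -> x \notin cover m' -> forall b, ~~ union_rel m m' x b.
Proof.
move=> h h' b; rewrite /union_rel inE; apply/negP => /orP [] hb.
  by move/negP: h; apply; apply/bigcupP; exists [set x; b]; rewrite // !inE eqxx.
by move/negP: h'; apply; apply/bigcupP; exists [set x; b]; rewrite // !inE eqxx.
Qed.

Lemma common_edge_closed k (m m' : {set {set 'I_k}}) C a b :
  is_matching m -> is_matching m' -> C \in m -> C \in m' ->
  union_rel m m' a b -> a \in C -> b \in C.
Proof.
move=> hm hm' hC hC'; rewrite /union_rel inE => /orP [] hab aC.
  by rewrite -(matching_uniq hm hab hC (setU11 a _) aC) !inE eqxx orbT.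
by rewrite -(matching_uniq hm' hab hC' (setU11 a _) aC) !inE eqxx orbT.
Qed.

Lemma theta_set k (m m' : {set {set 'I_k}}) :
  is_matching m -> is_matching m' -> #|U m| <= 1 -> #|U m'| <= 1 ->
  [set C in components (union_rel m m') | #|C| <= 2] = D m :&: D m'.
Proof.
move=> hm hm' hU hU'.
set r := union_rel m m'.
have hr : forall a b, r a b = ([set a; b] \in m :|: m') by [].
have hr' : forall a b, r a b = ([set a; b] \in m' :|: m) by move=> a b; rewrite hr (setUC m).
apply/setP => C; rewrite !inE; apply/andP/andP.
  case=> /imsetP [x _ ->] hc; rewrite -/(cc r x) in hc *.
  case: (boolP (x \in cover m)) => [/bigcupP [e he xe] | nx].
    have [-> he'] := key hm hm' hr hU' he xe hc.
    by split; rewrite ?he ?he'.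
  case: (boolP (x \in cover m')) => [/bigcupP [e he xe] | nx'].
    have [-> he'] := key hm' hm hr' hU he xe hc.
    by split; rewrite ?he ?he'.
  rewrite cc_iso; last exact: not_cover_rel.
  by split; apply/orP; right; apply: imset_f; rewrite /U inE ?nx ?nx'.
move=> [/orP [hC | /imsetP [x hx ->]] /orP [hC' | /imsetP [x' hx' hxx]]].
- have [x [y [xy Cxy]]] := cards2P _ (introT eqP (matching_size hm hC)).
  have sub : C \subset cc r x.
    apply/subsetP => z; rewrite Cxy => /set2P [] ->; rewrite inE; first exact: connect0.
    by apply: connect1; rewrite hr inE -Cxy hC.
  have sub2 : cc r x \subset C.
    apply/subsetP => z; rewrite inE.
    have cl : closed r (mem C).
      apply: intro_closed; first exact/sym_connect_sym/ur_sym.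
      by move=> a b; apply: common_edge_closed.
    by move=> hz; rewrite -(closed_connect cl hz) Cxy !inE eqxx.
  have eC : C = cc r x by apply/eqP; rewrite eqEsubset sub sub2.
  split; first by rewrite eC; apply: imset_f.
  by rewrite (matching_size hm hC).
- by move: (matching_size hm hC); rewrite hxx cards1.
- by move: (matching_size hm' hC'); rewrite cards1.
- move/set1_inj: hxx => <-{x'} in hx'.
  rewrite -(cc_iso (x := x) (r := r)); last first.
    by apply: not_cover_rel; [move: hx | move: hx']; rewrite inE.
  by rewrite imset_f // cc_iso ?cards1 //; apply: not_cover_rel; [move: hx | move: hx']; rewrite inE.
Qed.

Lemma theta_count k (m m' : {set {set 'I_k}}) :
  is_matching m -> is_matching m' -> #|U m| <= 1 -> #|U m'| <= 1 ->
  count (fun p => p <= 2)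
    (sort geq [seq #|C : {set 'I_k}| | C <- enum (components (union_rel m m'))])
  = #|D m :&: D m'|.
Proof.
move=> hm hm' hU hU'.
rewrite -(theta_set hm hm' hU hU') -count_enum_set.
by rewrite (permP (permEl (perm_sort _ _))) count_map.
Qed.

Section Lift.
End Lift.

Definition w k : 'I_k -> 'I_k.+1 := widen_ord (leqnSn k).
Arguments w : clear implicits.
Definition phi k (e : {set 'I_k}) : {set 'I_k.+1} :=
  if #|e| == 1 then ord_max |: (w k @: e) else w k @: e.
Definition pre k (e : {set 'I_k.+1}) : {set 'I_k} := w k @^-1: e.
Definition F k (m : {set {set 'I_k}}) := @phi k @: D m.
Definition G k (M : {set {set 'I_k.+1}}) := [set pre e | e in M & ord_max \notin e].

Lemma w_inj k : injective (w k).
Proof. by move=> x y /(congr1 val) /= /val_inj. Qed.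

Lemma w_max k x : (w k x == ord_max) = false.
Proof. by apply/negbTE; rewrite -val_eqE /= neq_ltn ltn_ord. Qed.

Lemma max_notin_imset k (e : {set 'I_k}) : ord_max \notin w k @: e.
Proof. by apply/imsetP => [[x _ /eqP]]; rewrite eq_sym w_max. Qed.

Lemma pre_phi k (e : {set 'I_k}) : pre (phi e) = e.
Proof.
apply/setP => x; rewrite /pre /phi inE.
by case: ifP => _; rewrite ?inE ?w_max ?mem_imset //; exact: w_inj.
Qed.

Lemma phi_inj k : injective (@phi k).
Proof. exact: can_inj (@pre_phi k). Qed.

Lemma maxin_phi k (e : {set 'I_k}) : (ord_max \in phi e) = (#|e| == 1).
Proof.
rewrite /phi; case: ifP => _; first by rewrite setU11.
by rewrite (negbTE (max_notin_imset _)).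
Qed.

Lemma F_inter k (m m' : {set {set 'I_k}}) : #|F m :&: F m'| = #|D m :&: D m'|.
Proof.
rewrite /F -imsetI; last by move=> x y _ _; apply: phi_inj.
by rewrite card_imset //; apply: phi_inj.
Qed.

Lemma is_matchingP k (m : {set {set 'I_k}}) :
  (forall e, e \in m -> #|e| = 2) ->
  (forall e e', e \in m -> e' \in m -> e != e' -> [disjoint e & e']) ->
  is_matching m.
Proof.
move=> h1 h2; apply/andP; split.
  by apply/forall_inP => e /h1 ->.
apply/forall_inP => e he; apply/forall_inP => e' he'; apply/implyP; exact: h2.
Qed.

Lemma phi_disj k (d d' : {set 'I_k}) :
  [disjoint d & d'] -> ~~ ((#|d| == 1) && (#|d'| == 1)) -> [disjoint phi d & phi d'].
Proof.
move=> hd hs; rewrite -setI_eq0; apply/eqP/setP => z; rewrite !inE.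
apply/negbTE/negP => /andP [z1 z2].
case: (z =P ord_max) => [ez | nz].
  by move: hs; rewrite -!maxin_phi -ez z1 z2.
have get : forall e : {set 'I_k}, z \in phi e -> exists2 x, x \in e & z = w k x.
  move=> e; rewrite /phi; case: ifP => _ hz.
    move: hz; rewrite !inE => /orP [/eqP ez | /imsetP [x hx ex]]; first by case: (nz ez).
    by exists x.
  by move: hz => /imsetP [x hx ex]; exists x.
have [x xd ex] := get _ z1; have [y yd ey] := get _ z2.
move: ex; rewrite ey => /w_inj eyx; subst y.
by move: hd => /disjoint_setI0/setP/(_ x); rewrite !inE xd yd.
Qed.

Lemma D_card k n (m : {set {set 'I_k}}) : k.+1 = 2 * n ->
  is_matching m -> #|m| = n - 1 -> #|D m| = n.
Proof.
move=> hk hm hc.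
have hU := U_card hk hm hc.
rewrite /D cardsU card_imset; last exact: set1_inj.
have -> : m :&: [set [set x] | x in U m] = set0.
  apply/setP => e; rewrite !inE; apply/negbTE/negP => /andP [he /imsetP [x _ ex]].
  by move: (matching_size hm he); rewrite ex cards1.
by rewrite cards0 hc hU; lia.
Qed.

Lemma F_ok k n (m : {set {set 'I_k}}) : k.+1 = 2 * n ->
  is_matching m -> #|m| = n - 1 -> is_matching (F m) && (#|F m| == n).
Proof.
move=> hk hm hc.
have hU := U_card hk hm hc.
apply/andP; split; last by rewrite /F card_imset ?(D_card hk hm hc) //; exact: phi_inj.
apply: is_matchingP.
  move=> e /imsetP [d]; rewrite inE => /orP [hd | /imsetP [u _ ->]] ->.
    rewrite /phi (matching_size hm hd) /= card_imset ?(matching_size hm hd) //.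
    exact: w_inj.
  by rewrite /phi cards1 /= imset_set1 cards2 eq_sym w_max.
move=> e e' /imsetP [d hd ->] /imsetP [d' hd' ->] ne.
have ndd : d != d' by apply: contraNneq ne => ->.
move: hd hd' ndd; rewrite !inE => /orP [hd | /imsetP [u hu ->]] /orP [hd' | /imsetP [u' hu' ->]] ndd.
- apply: phi_disj; first exact: matching_disj hm hd hd' ndd.
  by rewrite (matching_size hm hd).
- apply: phi_disj; last by rewrite (matching_size hm hd).
  rewrite disjoint_sym disjoints1; apply: contraT; rewrite negbK => ud.
  by move: hu'; rewrite /U inE => /negP h; exfalso; apply: h; apply/bigcupP; exists d.
- apply: phi_disj; last by rewrite (matching_size hm hd') andbF.
  rewrite disjoints1; apply: contraT; rewrite negbK => ud.
  by move: hu; rewrite /U inE => /negP h; exfalso; apply: h; apply/bigcupP; exists d'.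
- have /cards1P [z hz] : #|U m| == 1 by rewrite hU.
  by move: hu hu' ndd; rewrite hz !inE => /eqP -> /eqP ->; rewrite eqxx.
Qed.

Lemma w_pre k (e : {set 'I_k.+1}) : ord_max \notin e -> w k @: pre e = e.
Proof.
move=> hm; apply/setP => z; apply/imsetP/idP => [[x] | hz].
  by rewrite inE => hx ->.
have zk : z < k.
  have := ltn_ord z; rewrite ltnS leq_eqVlt => /orP [/eqP ez | //].
  have ezm : z = ord_max by apply: val_inj.
  by move: hm; rewrite -ezm hz.
exists (Ordinal zk); last by apply: val_inj.
by rewrite inE; have -> : w k (Ordinal zk) = z by apply: val_inj.
Qed.

Lemma phi_pre k (e : {set 'I_k.+1}) : ord_max \notin e -> #|e| = 2 -> phi (pre e) = e.
Proof.
move=> hm he; have ee := w_pre hm.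
have c : #|pre e| = 2 by rewrite -he -{2}ee card_imset //; exact: w_inj.
by rewrite /phi c /= ee.
Qed.

Lemma pm_structure k n (M : {set {set 'I_k.+1}}) : k.+1 = 2 * n ->
  is_matching M -> #|M| = n -> exists u : 'I_k, [set w k u; ord_max] \in M.
Proof.
move=> hk hM hc.
have cT : cover M = setT.
  apply/eqP; rewrite eqEcard subsetT cardsT card_ord cover_card // hc hk leqnn.
  done.
have : ord_max \in cover M by rewrite cT inE.
case/bigcupP => e0 he0 me0.
have [v vm ev] := edge_other (matching_size hM he0) me0.
have vk : v < k.
  have := ltn_ord v; rewrite ltnS leq_eqVlt => /orP [/eqP ez | //].
  have ezm : v = ord_max by apply: val_inj.
  by move: vm; rewrite ezm eqxx.
exists (Ordinal vk).
have -> : w k (Ordinal vk) = v by apply: val_inj.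
by rewrite pair_sym -ev.
Qed.

Lemma G_props k n (M : {set {set 'I_k.+1}}) : k.+1 = 2 * n ->
  is_matching M -> #|M| = n ->
  (is_matching (G M) && (#|G M| == n - 1)) /\ F (G M) = M.
Proof.
move=> hk hM hc.
have [u he0] := pm_structure hk hM hc.
set e0 := [set w k u; ord_max] in he0.
have maxe : forall e, e \in M -> (ord_max \in e) = (e == e0).
  move=> e he; apply/idP/eqP => [me | ->]; last by rewrite !inE eqxx orbT.
  by apply: (matching_uniq hM he he0 me); rewrite !inE eqxx orbT.
have GE : G M = @pre k @: (M :\ e0).
  apply/setP => x; apply/imsetP/imsetP => [[e] | [e]].
    by rewrite !inE => /andP [he me] ->; exists e; rewrite // !inE he andbT -maxe.
  by rewrite !inE => /andP [ne he] ->; exists e; rewrite // !inE he maxe.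
have hD : forall e, e \in M :\ e0 -> ord_max \notin e /\ #|e| = 2.
  move=> e; rewrite !inE => /andP [ne he]; split; first by rewrite maxe.
  exact: matching_size hM he.
have pinj : {in M :\ e0 &, injective (@pre k)}.
  move=> e e' he he' eq.
  by rewrite -(w_pre (hD _ he).1) -(w_pre (hD _ he').1) eq.
have cG : #|G M| = n - 1.
  rewrite GE card_in_imset //; move: (cardsD1 e0 M); rewrite he0 hc /= add1n => ->; by rewrite subn1.
have mG : is_matching (G M).
  apply: is_matchingP; rewrite GE.
    move=> x /imsetP [e he ->]; have [h1 h2] := hD _ he.
    by rewrite -h2 -{2}(w_pre h1) card_imset //; exact: w_inj.
  move=> x x' /imsetP [e he ->] /imsetP [e' he' ->] ne.
  have nee : e != e' by apply: contraNneq ne => ->.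
  move: (he) (he'); rewrite !inE => /andP [_ hM1] /andP [_ hM2].
  have dj := matching_disj hM hM1 hM2 nee.
  rewrite -setI_eq0; apply/eqP/setP => z; rewrite !inE; apply/negbTE/negP => /andP [z1 z2].
  by move: dj => /disjoint_setI0/setP/(_ (w k z)); rewrite !inE z1 z2.
split; first by rewrite mG cG eqxx.
have uU : u \in U (G M).
  rewrite /U inE; apply/negP => /bigcupP [x]; rewrite GE => /imsetP [e he ->].
  rewrite inE => ue.
  move: he; rewrite !inE => /andP [ne hMe].
  have := matching_uniq hM hMe he0 ue; rewrite /e0 !inE eqxx => /(_ isT) /eqP.
  by rewrite (negbTE ne).
have UG : U (G M) = [set u].
  have /cards1P [z hz] : #|U (G M)| == 1 by rewrite (U_card hk mG cG).
  by move: uU; rewrite hz inE => /eqP ->.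
rewrite /F /D UG imset_set1 imsetU imset_set1 GE -imset_comp.
have -> : [set (phi (k:=k) \o pre (k:=k)) x | x in M :\ e0] = M :\ e0.
  rewrite -[RHS]imset_id; apply: eq_in_imset => e he /=.
  by have [h1 h2] := hD _ he; rewrite phi_pre.
have -> : phi [set u] = e0.
  by rewrite /phi cards1 /= imset_set1 /e0 pair_sym.
by rewrite setUC setD1K.
Qed.

Lemma GF k (m : {set {set 'I_k}}) : is_matching m -> G (F m) = m.
Proof.
move=> hm; apply/setP => x; apply/imsetP/idP => [[e] | hx].
  rewrite inE => /andP [/imsetP [d hd ->] nm] ->.
  rewrite pre_phi; move: nm; rewrite maxin_phi.
  move: hd; rewrite inE => /orP [// | /imsetP [y _ ->]].
  by rewrite cards1.
exists (phi x); last by rewrite pre_phi.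
rewrite inE; apply/andP; split; first by apply: imset_f; rewrite inE hx.
by rewrite maxin_phi (matching_size hm hx).
Qed.

Definition NPMk (k n : nat) : finType :=
  {m : {set {set 'I_k}} | is_matching m && (#|m| == n - 1)}.
Definition PMk (N n : nat) : finType :=
  {m : {set {set 'I_N}} | is_matching m && (#|m| == n)}.
Definition ThetaK (k n t : nat) : rel (NPMk k n) :=
  fun m m' => count (fun p => p <= 2)
    (sort geq [seq #|C : {set 'I_k}| | C <- enum (components (union_rel (val m) (val m')))]) < t.
Definition GammaK (N n t : nat) : rel (PMk N n) :=
  fun m m' => #|val m :&: val m'| < t.

Arguments ThetaK : clear implicits.
Arguments GammaK : clear implicits.

Lemma gen k N n t : k.+1 = N -> N = 2 * n -> graph_iso (ThetaK k n t) (GammaK N n t).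
Proof.
move=> eN hk; subst N.
have fok : forall m : NPMk k n, is_matching (F (val m)) && (#|F (val m)| == n).
  by move=> m; case/andP: (valP m) => h1 /eqP h2; exact: F_ok hk h1 h2.
have gok : forall M : PMk k.+1 n, is_matching (G (val M)) && (#|G (val M)| == n - 1).
  by move=> M; case/andP: (valP M) => h1 /eqP h2; exact: (G_props hk h1 h2).1.
exists (fun m => (Sub (F (val m)) (fok m) : PMk k.+1 n)); split.
  exists (fun M => (Sub (G (val M)) (gok M) : NPMk k n)).
    move=> m; apply: val_inj => /=; rewrite GF //.
    by case/andP: (valP m).
  move=> M; apply: val_inj => /=.
  by case/andP: (valP M) => h1 /eqP h2; exact: (G_props hk h1 h2).2.
move=> m m'; rewrite /ThetaK /GammaK /= F_inter.
case/andP: (valP m) => h1 /eqP h2; case/andP: (valP m') => h1' /eqP h2'.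
by rewrite theta_count // ?(U_card hk h1 h2) ?(U_card hk h1' h2').
Qed.

Theorem mainTheorem12 (n t : nat) (hn : 0 < n) :
  graph_iso (Theta n t) (Gamma n t).
Proof.
apply: (@gen (2 * n - 1) (2 * n) n t) => //.
by rewrite subn1 prednK // muln_gt0.
Qed.
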